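(* There is no quadratical quasigroup $(Q,\cdot)$ containing two distinct elements $a,b$ such that $Q=\{aba\}\cup H1\cup H2\cup H3\cup H4\cup H5\cup H6$ with the six sets $H1,\dots,H6$ pairwise disjoint (equivalently, with $|Q|=25$).
   Context: A quadratical quasigroup is a quasigroup $(Q,\cdot)$ satisfying $xy\cdot x=zx\cdot yz$ for all $x,y,z\in Q$; equivalently, a groupoid satisfying $x\cdot x=x$, $yx\cdot xy=x$ and $xy\cdot zw=xz\cdot yw$ for all $x,y,z,w$. For distinct $a,b\in Q$ write $aba=ab\cdot a$ and define elements $[t,k]$ (written $tk$), $t\geq 1$, $k\in\{1,2,3,4\}$, by $11=a$, $12=ab$, $13=ba$, $14=b$, and for $n\geq 2$: $n1=(n-1)1\cdot(n-1)2$, $n2=(n-1)2\cdot(n-1)4$, $n3=(n-1)3\cdot(n-1)1$, $n4=(n-1)4\cdot(n-1)3$. Put $Ht=\{t1,t2,t3,t4\}$. *)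

(* Defs.v *)
From Stdlib Require Import Arith.

Definition is_quasigroup {T : Type} (mul : T -> T -> T) : Prop :=
  (forall a b : T, exists! x : T, mul a x = b) /\
  (forall a b : T, exists! y : T, mul y a = b).

Definition is_quadratical_quasigroup {T : Type} (mul : T -> T -> T) : Prop :=
  is_quasigroup mul /\
  (forall x y z : T, mul (mul x y) x = mul (mul z x) (mul y z)).

Definition aba {T : Type} (mul : T -> T -> T) (a b : T) : T := mul (mul a b) a.

(* Hrow mul a b m = ([m+1,1], [m+1,2], [m+1,3], [m+1,4]) *)
Fixpoint Hrow {T : Type} (mul : T -> T -> T) (a b : T) (m : nat) : T * T * T * T :=
  match m with
  | O => (a, mul a b, mul b a, b)
  | S m' =>
      match Hrow mul a b m' with
      | (x1, x2, x3, x4) => (mul x1 x2, mul x2 x4, mul x3 x1, mul x4 x3)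
      end
  end.

(* the element [t,k] = tk, for t >= 1 and k in {1,2,3,4} *)
Definition elt {T : Type} (mul : T -> T -> T) (a b : T) (t k : nat) : T :=
  match Hrow mul a b (t - 1) with
  | (x1, x2, x3, x4) =>
      match k with 1 => x1 | 2 => x2 | 3 => x3 | _ => x4 end
  end.

Definition inH {T : Type} (mul : T -> T -> T) (a b : T) (t : nat) (x : T) : Prop :=
  exists k, 1 <= k <= 4 /\ x = elt mul a b t k.

(* Main.v *)
Require Import Defs.
From Stdlib Require Import Arith.
From Stdlib Require Import Arith ZArith Lia ClassicalEpsilon List.

Import ListNotations.
Section Q.
Variables (T : Type) (m : T -> T -> T).
Hypothesis Hl : forall a b, exists! x, m a x = b.
Hypothesis Hr : forall a b, exists! y, m y a = b.
Hypothesis HA : forall x y z, m (m x y) x = m (m z x) (m y z).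

Lemma lcan a x y : m a x = m a y -> x = y.
Proof. intro H. destruct (Hl a (m a x)) as [u [_ Hu]].
  rewrite <- (Hu x eq_refl), <- (Hu y (eq_sym H)). reflexivity. Qed.
Lemma rcan a x y : m x a = m y a -> x = y.
Proof. intro H. destruct (Hr a (m x a)) as [u [_ Hu]].
  rewrite <- (Hu x eq_refl), <- (Hu y (eq_sym H)). reflexivity. Qed.
Lemma exl a b : exists x, m a x = b.
Proof. destruct (Hl a b) as [x [H _]]; eauto. Qed.
Lemma exr a b : exists x, m x a = b.
Proof. destruct (Hr a b) as [x [H _]]; eauto. Qed.
Definition ld a b : T := proj1_sig (constructive_indefinite_description _ (exl a b)).
Definition rd b a : T := proj1_sig (constructive_indefinite_description _ (exr a b)).
Lemma ld_spec a b : m a (ld a b) = b.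
Proof. unfold ld. destruct constructive_indefinite_description; auto. Qed.
Lemma rd_spec a b : m (rd b a) a = b.
Proof. unfold rd. destruct constructive_indefinite_description; auto. Qed.

Lemma idem x : m x x = x.
Proof. symmetry. apply (lcan (m x x)). rewrite <- HA. reflexivity. Qed.
Lemma K x y : m (m y x) (m x y) = x.
Proof. rewrite <- HA, !idem. reflexivity. Qed.
Lemma Ps x y : m (m x y) x = m (m y x) y.
Proof. rewrite (HA x y y), idem. reflexivity. Qed.
Lemma Cl w q x z : m w q = m x z -> m q x = m z w.
Proof. intro H.
  set (A := m q w). set (B := m z x). set (p := m w q).
  assert (E1 : m p A = q) by apply K.
  assert (E2 : m A p = w) by apply K.
  assert (E3 : m p B = z) by (unfold p; rewrite H; apply K).
  assert (E4 : m B p = x) by (unfold p; rewrite H; apply K).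
  rewrite <- E1, <- E4, <- E3, <- E2, <- !HA. apply Ps. Qed.
Lemma medial x y z w : m (m x y) (m z w) = m (m x z) (m y w).
Proof.
  set (b := rd (m z w) x). set (q := ld w (m x z)).
  assert (Hb : m b x = m z w) by apply rd_spec.
  assert (Hq : m w q = m x z) by apply ld_spec.
  assert (qb : q = b). { apply (rcan x). rewrite Hb. apply Cl. exact Hq. }
  rewrite <- Hb, <- Hq, <- !HA, qb. apply Ps. Qed.
Variable o : T.
Definition R x := m x o.
Definition L x := m o x.
Definition Ri x := rd x o.
Definition Li x := ld o x.
Lemma R_Ri x : R (Ri x) = x. Proof. apply rd_spec. Qed.
Lemma L_Li x : L (Li x) = x. Proof. apply ld_spec. Qed.
Lemma Ri_R x : Ri (R x) = x. Proof. apply (rcan o). apply rd_spec. Qed.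
Lemma Li_L x : Li (L x) = x. Proof. apply (lcan o). apply ld_spec. Qed.
Lemma R_inj x y : R x = R y -> x = y. Proof. apply rcan. Qed.
Lemma L_inj x y : L x = L y -> x = y. Proof. apply lcan. Qed.
Lemma R_mul x y : R (m x y) = m (R x) (R y).
Proof. unfold R. rewrite <- medial, idem; auto. Qed.
Lemma L_mul x y : L (m x y) = m (L x) (L y).
Proof. unfold L. rewrite <- medial, idem; auto. Qed.
Lemma Ri_mul x y : Ri (m x y) = m (Ri x) (Ri y).
Proof. apply R_inj. rewrite R_mul, !R_Ri. auto. Qed.
Lemma Li_mul x y : Li (m x y) = m (Li x) (Li y).
Proof. apply L_inj. rewrite L_mul, !L_Li. auto. Qed.
Lemma RL x : R (L x) = L (R x).
Proof. unfold R, L. rewrite <- (idem o) at 2. rewrite medial, idem; auto. Qed.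
Lemma RiLi x : Ri (Li x) = Li (Ri x).
Proof. apply R_inj, L_inj. rewrite R_Ri, L_Li, <- RL, L_Li, R_Ri. reflexivity. Qed.
Lemma Ri_o : Ri o = o. Proof. apply R_inj. rewrite R_Ri. unfold R. now rewrite idem. Qed.
Lemma Li_o : Li o = o. Proof. apply L_inj. rewrite L_Li. unfold L. now rewrite idem. Qed.

Definition add x y := m (Ri x) (Li y).
Definition opp x := L (ld (Ri x) o).
Lemma add0l y : add o y = y. Proof. unfold add. rewrite Ri_o. apply L_Li. Qed.
Lemma add0r y : add y o = y. Proof. unfold add. rewrite Li_o. apply R_Ri. Qed.
Lemma addC x y : add x y = add y x.
Proof. unfold add.
  rewrite <- (R_Ri x), <- (L_Li y). rewrite !Ri_R, !Li_L.
  set (u := Ri x). set (v := Li y). unfold R, L.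
  rewrite Ri_mul, Li_mul, Ri_o, Li_o, medial. fold (L (Li u)). fold (R (Ri v)).
  rewrite L_Li, R_Ri. reflexivity. Qed.
Lemma addA x y z : add (add x y) z = add x (add y z).
Proof. unfold add. rewrite Ri_mul, Li_mul.
  rewrite <- (L_Li (Li z)) at 1. unfold L at 1. rewrite medial.
  fold (R (Ri (Ri x))). rewrite R_Ri, RiLi. reflexivity. Qed.
Lemma addN x : add x (opp x) = o.
Proof. unfold add, opp. rewrite Li_L. apply ld_spec. Qed.
Lemma mul_add x y : m x y = add (R x) (L y).
Proof. unfold add. rewrite Ri_R, Li_L. reflexivity. Qed.
Lemma RLi y : R (Li y) = Li (R y).
Proof. apply L_inj. rewrite <- RL, !L_Li. reflexivity. Qed.
Lemma R_add x y : R (add x y) = add (R x) (R y).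
Proof. unfold add. rewrite R_mul, R_Ri, Ri_R, RLi. reflexivity. Qed.
Lemma addNl x : add (opp x) x = o. Proof. rewrite addC. apply addN. Qed.
Lemma add_cancel_l x y z : add x y = add x z -> y = z.
Proof. intro H. rewrite <- (add0l y), <- (add0l z), <- (addNl x), !addA, H. reflexivity. Qed.
Lemma opp_unique x y : add x y = o -> y = opp x.
Proof. intro H. apply (add_cancel_l x). rewrite H, addN. reflexivity. Qed.
Lemma opp_opp x : opp (opp x) = x.
Proof. symmetry. apply opp_unique. apply addNl. Qed.
Lemma opp_o : opp o = o.
Proof. symmetry. apply opp_unique. apply add0l. Qed.
Lemma opp_add x y : opp (add x y) = add (opp x) (opp y).
Proof. symmetry. apply opp_unique.
  rewrite addA, (addC y), addA, addNl, add0r, addN. reflexivity. Qed.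

Fixpoint nmul (n : nat) (x : T) : T := match n with O => o | S k => add x (nmul k x) end.
Definition zmul (z : Z) (x : T) : T :=
  match z with Z0 => o | Zpos p => nmul (Pos.to_nat p) x | Zneg p => opp (nmul (Pos.to_nat p) x) end.

Lemma nmul_add a b x : nmul (a + b) x = add (nmul a x) (nmul b x).
Proof. induction a; simpl. now rewrite add0l. rewrite IHa, addA. reflexivity. Qed.

Inductive ex := Var (n : nat) | Zr | Ad (a b : ex) | Ng (a : ex).
Fixpoint eval (env : list T) (e : ex) : T :=
  match e with
  | Var n => nth n env o | Zr => o
  | Ad a b => add (eval env a) (eval env b) | Ng a => opp (eval env a) end.
Fixpoint ladd (l1 l2 : list Z) : list Z :=
  match l1, l2 with
  | nil, _ => l2 | _, nil => l1
  | a :: r1, b :: r2 => (a + b)%Z :: ladd r1 r2 end.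
Definition lneg (l : list Z) := map Z.opp l.
Fixpoint single (n : nat) : list Z := match n with O => 1%Z :: nil | S k => 0%Z :: single k end.
Fixpoint norm (e : ex) : list Z :=
  match e with
  | Var n => single n | Zr => nil | Ad a b => ladd (norm a) (norm b) | Ng a => lneg (norm a) end.
Fixpoint lin (env : list T) (l : list Z) : T :=
  match l with
  | nil => o
  | c :: r => add (zmul c (nth 0 env o)) (lin (tl env) r) end.

Lemma zmul_nat z x : zmul z x = add (nmul (Z.to_nat z) x) (opp (nmul (Z.to_nat (- z)) x)).
Proof. destruct z; simpl.
  - rewrite opp_o, add0l. reflexivity.
  - rewrite opp_o, add0r. reflexivity.
  - rewrite add0l. reflexivity. Qed.
Lemma shuffle4 a b c d : add (add a b) (add c d) = add (add a c) (add b d).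
Proof. rewrite !addA. f_equal. rewrite <- !addA. f_equal. apply addC. Qed.
Lemma addKN B A : add B (add A (opp B)) = A.
Proof. rewrite (addC B), addA, addNl, add0r. reflexivity. Qed.
Lemma sub_trick A B C D E F :
  add E (add B D) = add F (add A C) ->
  add E (opp F) = add (add A (opp B)) (add C (opp D)).
Proof. intro H.
  apply (add_cancel_l (add F (add B D))).
  transitivity (add E (add B D)).
  - rewrite shuffle4, (addC F E), shuffle4, addN, add0r. reflexivity.
  - rewrite H. rewrite addA. f_equal.
    rewrite shuffle4, !addKN. reflexivity.
Qed.
Lemma zmul_addl p q x : zmul (p + q) x = add (zmul p x) (zmul q x).
Proof. rewrite !zmul_nat. apply sub_trick.
  rewrite <- !nmul_add. f_equal. lia. Qed.
Lemma zmul_opp z x : zmul (- z) x = opp (zmul z x).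
Proof. destruct z; simpl; auto. symmetry; apply opp_o. symmetry; apply opp_opp. Qed.
Lemma zmul0 x : zmul 0 x = o. Proof. reflexivity. Qed.
Lemma zmul1 x : zmul 1 x = x. Proof. simpl. apply add0r. Qed.

Lemma lin_nil_env l : lin nil l = o.
Proof. induction l; simpl; auto. rewrite IHl, add0r. destruct a; simpl; auto.
  - induction (Pos.to_nat p); simpl; auto. rewrite IHn. apply add0l.
  - assert (E : nmul (Pos.to_nat p) o = o) by (induction (Pos.to_nat p); simpl; auto; rewrite IHn; apply add0l).
    rewrite E. apply opp_o. Qed.
Lemma lin_ladd env l1 l2 : lin env (ladd l1 l2) = add (lin env l1) (lin env l2).
Proof. revert env l2; induction l1; intros env l2; simpl. now rewrite add0l.
  destruct l2; simpl. now rewrite add0r.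
  rewrite IHl1, zmul_addl. apply shuffle4. Qed.
Lemma lin_lneg env l : lin env (lneg l) = opp (lin env l).
Proof. revert env; induction l; intros env; simpl. now rewrite opp_o.
  rewrite IHl, zmul_opp, opp_add. reflexivity. Qed.
Lemma lin_single env n : lin env (single n) = nth n env o.
Proof. revert env; induction n; intros env; cbn [single lin].
  - rewrite zmul1, add0r. destruct env; reflexivity.
  - rewrite IHn, zmul0, add0l. destruct env; simpl; auto. destruct n; reflexivity. Qed.
Lemma norm_sound env e : eval env e = lin env (norm e).
Proof. induction e; simpl.
  - now rewrite lin_single.
  - reflexivity.
  - now rewrite lin_ladd, IHe1, IHe2.
  - now rewrite lin_lneg, IHe. Qed.
Fixpoint lzero (l : list Z) : bool := match l with nil => true | c :: r => Z.eqb c 0 && lzero r end.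
Lemma lzero_lin env l : lzero l = true -> lin env l = o.
Proof. revert env; induction l; intros env H; simpl in *; auto.
  apply andb_prop in H. destruct H as [H1 H2]. apply Z.eqb_eq in H1. subst.
  rewrite IHl; auto. apply add0l. Qed.
Lemma gsolve_lemma env e1 e2 : lzero (ladd (norm e1) (lneg (norm e2))) = true -> eval env e1 = eval env e2.
Proof. intro H. apply lzero_lin with (env := env) in H.
  rewrite lin_ladd, lin_lneg, <- !norm_sound in H.
  rewrite <- (opp_opp (eval env e2)). apply opp_unique. rewrite addC. exact H. Qed.

Ltac idx x l := lazymatch l with
  | (?y :: ?r) => lazymatch x with y => constr:(O) | _ => let n := idx x r in constr:(S n) end end.
Ltac reify l t := lazymatch t with
  | add ?a ?b => let ra := reify l a in let rb := reify l b in constr:(Ad ra rb)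
  | opp ?a => let ra := reify l a in constr:(Ng ra)
  | o => constr:(Zr)
  | _ => let n := idx t l in constr:(Var n) end.
Ltac gsolve l := lazymatch goal with |- ?a = ?b =>
  let ra := reify l a in let rb := reify l b in
  change (eval l ra = eval l rb); apply gsolve_lemma; vm_compute; reflexivity end.

Goal forall x y z, add (add x (opp y)) (add z y) = add z (add x o).
intros. gsolve (x :: y :: z :: nil). Qed.
Lemma use_eq a b c d : add a (opp b) = add c (opp d) -> c = d -> a = b.
Proof. intros H1 H2. subst d. rewrite addN in H1.
  rewrite <- (opp_opp b). apply opp_unique. rewrite addC. exact H1. Qed.
Ltac gsolve_with H l := lazymatch type of H with ?c = ?d =>
  apply (use_eq _ _ c d); [gsolve l | exact H] end.

Section Hom.
Variable f : T -> T.
Hypothesis Hf : forall x y, f (add x y) = add (f x) (f y).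
Lemma hom_o : f o = o.
Proof. apply (add_cancel_l (f o)). rewrite <- Hf, !add0r. reflexivity. Qed.
Lemma hom_opp x : f (opp x) = opp (f x).
Proof. apply opp_unique. rewrite <- Hf, addN. apply hom_o. Qed.
Lemma hom_nmul n x : f (nmul n x) = nmul n (f x).
Proof. induction n; simpl. apply hom_o. rewrite Hf, IHn. reflexivity. Qed.
Lemma hom_zmul p x : f (zmul p x) = zmul p (f x).
Proof. destruct p; simpl. apply hom_o. apply hom_nmul. rewrite hom_opp, hom_nmul. reflexivity. Qed.
End Hom.
Lemma nmul_addr n x y : nmul n (add x y) = add (nmul n x) (nmul n y).
Proof. induction n; simpl. now rewrite add0l. rewrite IHn. apply shuffle4. Qed.
Lemma zmul_addr p x y : zmul p (add x y) = add (zmul p x) (zmul p y).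
Proof. destruct p; simpl. now rewrite add0l. apply nmul_addr. rewrite nmul_addr. apply opp_add. Qed.
Lemma zmul_nat_of n x : zmul (Z.of_nat n) x = nmul n x.
Proof. destruct n. reflexivity. simpl. rewrite SuccNat2Pos.id_succ. reflexivity. Qed.
Lemma zmul_mul p q x : zmul (p * q) x = zmul p (zmul q x).
Proof.
  assert (Hn : forall n, zmul (Z.of_nat n * q) x = nmul n (zmul q x)).
  { induction n. reflexivity. rewrite Nat2Z.inj_succ, Z.mul_succ_l, zmul_addl, IHn. simpl.
    apply addC. }
  destruct (Z_le_gt_dec 0 p).
  - rewrite <- (Z2Nat.id p) by lia. rewrite Hn, zmul_nat_of. reflexivity.
  - replace p with (- Z.of_nat (Z.to_nat (- p)))%Z by lia.
    rewrite Z.mul_opp_l, !zmul_opp, Hn, zmul_nat_of. reflexivity. Qed.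

Lemma R_o : R o = o. Proof. apply idem. Qed.
Lemma R_opp x : R (opp x) = opp (R x). Proof. apply hom_opp. apply R_add. Qed.
Lemma L_sub x : L x = add x (opp (R x)).
Proof. apply (add_cancel_l (R x)). rewrite <- mul_add, idem. gsolve (x :: R x :: nil). Qed.
Lemma key z : add (add (R (R z)) (R (R z))) z = add (R z) (R z).
Proof.
  assert (H := K o z). rewrite mul_add in H. fold (R z) (L z) in H.
  rewrite !L_sub, !R_add, !R_opp in H.
  gsolve_with H (z :: R z :: R (R z) :: nil). Qed.
Definition I x := add (add (R x) (R x)) (opp x).
Lemma I_add x y : I (add x y) = add (I x) (I y).
Proof. unfold I. rewrite R_add. gsolve (x :: y :: R x :: R y :: nil). Qed.
Lemma II z : I (I z) = opp z.
Proof. unfold I. rewrite !R_add, !R_opp. assert (H := key z).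
  assert (H' := f_equal2 add H H).
  gsolve_with H' (z :: R z :: R (R z) :: nil). Qed.
Lemma two_inj x y : add x x = add y y -> x = y.
Proof. intro H. assert (H1 := key (add x (opp y))). rewrite !R_add, !R_opp in H1.
  assert (H2 : R (R (add x x)) = R (R (add y y))) by now rewrite H.
  assert (H3 : R (add x x) = R (add y y)) by now rewrite H.
  repeat rewrite R_add in H2; repeat rewrite R_add in H3.
  assert (H4 := f_equal2 add H1 (f_equal2 add (eq_sym H2) H3)).
  gsolve_with H4 (x :: y :: R x :: R y :: R (R x) :: R (R y) :: nil). Qed.
Lemma mul2 x y : add (m x y) (m x y) = add (add x (I x)) (add y (opp (I y))).
Proof. rewrite mul_add, L_sub. unfold I. gsolve (x :: y :: R x :: R y :: nil). Qed.
Lemma I_opp x : I (opp x) = opp (I x). Proof. apply hom_opp, I_add. Qed.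
Lemma I_zmul p x : I (zmul p x) = zmul p (I x). Proof. apply hom_zmul, I_add. Qed.
Lemma zmul_opp_r p x : zmul p (opp x) = opp (zmul p x). Proof. apply hom_opp. intros; apply zmul_addr. Qed.
Lemma zmul_o p : zmul p o = o. Proof. apply hom_o. intros; apply zmul_addr. Qed.

(* Gaussian integers *)
Definition gadd (u v : Z * Z) : Z * Z := (fst u + fst v, snd u + snd v)%Z.
Definition gmul (u v : Z * Z) : Z * Z :=
  (fst u * fst v - snd u * snd v, fst u * snd v + snd u * fst v)%Z.
Definition gsub (u v : Z * Z) : Z * Z := (fst u - fst v, snd u - snd v)%Z.
Definition gsc (n : Z) (u : Z * Z) : Z * Z := (n * fst u, n * snd u)%Z.
Variable a : T.
Definition F (z : Z * Z) : T := add (zmul (fst z) a) (zmul (snd z) (I a)).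
Lemma F_add u v : F (gadd u v) = add (F u) (F v).
Proof. unfold F, gadd; cbn [fst snd]. rewrite !zmul_addl. apply shuffle4. Qed.
Lemma F_sc n u : F (gsc n u) = zmul n (F u).
Proof. unfold F, gsc; cbn [fst snd]. rewrite zmul_addr, !zmul_mul. reflexivity. Qed.
Lemma F_I u : I (F u) = F (gmul (0%Z, 1%Z) u).
Proof. unfold F, gmul; destruct u as [p q]; cbn [fst snd].
  rewrite I_add, !I_zmul, II, zmul_opp_r, <- zmul_opp. rewrite addC. f_equal; f_equal; lia. Qed.
Lemma F_mul c u : F (gmul c u) = add (zmul (fst c) (F u)) (zmul (snd c) (I (F u))).
Proof. rewrite F_I, <- !F_sc, <- F_add. f_equal. destruct c, u; unfold gmul, gadd, gsc; cbn [fst snd]. f_equal; lia. Qed.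
Lemma F_mul0 c u : F u = o -> F (gmul c u) = o.
Proof. intro H. rewrite F_mul, H. unfold I. rewrite R_o, add0r, opp_o, add0r, !zmul_o. apply add0r. Qed.
Lemma zmul_m1 x : zmul (-1) x = opp x.
Proof. unfold zmul. change (Pos.to_nat 1) with 1%nat. simpl. rewrite add0r. reflexivity. Qed.
Lemma F_sub u v : F (gsub u v) = add (F u) (opp (F v)).
Proof. assert (E : gsub u v = gadd u (gsc (-1) v)) by (destruct u, v; unfold gsub, gadd, gsc; cbn [fst snd]; f_equal; lia).
  rewrite E, F_add, F_sc, zmul_m1. reflexivity. Qed.
Lemma F_eq0 u v : F u = F v -> F (gsub u v) = o.
Proof. intro H. rewrite F_sub, H. apply addN. Qed.
Lemma F_0eq u v : F (gsub u v) = o -> F u = F v.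
Proof. intro H. rewrite F_sub in H. rewrite <- (opp_opp (F v)). apply opp_unique. rewrite addC; exact H. Qed.
Fixpoint gdbl (e : nat) (u : Z * Z) : Z * Z := match e with O => u | S k => gdbl k (gadd u u) end.
Lemma F_dbl e u : F (gdbl e u) = o -> F u = o.
Proof. revert u; induction e; intros u H; simpl in *; auto.
  apply IHe in H. rewrite F_add in H. apply two_inj. rewrite H. symmetry; apply add0r. Qed.
Lemma cert1 d c e n1 n2 : F d = o -> gdbl e (gsub n1 n2) = gmul c d -> F n1 = F n2.
Proof. intros H E. apply F_0eq, (F_dbl e). rewrite E. apply F_mul0, H. Qed.
Lemma cert2 d1 d2 c1 c2 e n1 n2 : F d1 = o -> F d2 = o ->
  gdbl e (gsub n1 n2) = gadd (gmul c1 d1) (gmul c2 d2) -> F n1 = F n2.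
Proof. intros H1 H2 E. apply F_0eq, (F_dbl e). rewrite E, F_add, F_mul0, F_mul0; auto. apply add0r. Qed.
Lemma mulF u v w : gadd (gmul (1%Z,1%Z) u) (gmul (1%Z,(-1)%Z) v) = gadd w w -> m (F u) (F v) = F w.
Proof. intro E. apply two_inj. rewrite mul2.
  transitivity (F (gadd (gadd u (gmul (0%Z,1%Z) u)) (gsub v (gmul (0%Z,1%Z) v)))).
  { rewrite F_add, F_add, F_sub, !F_I. reflexivity. }
  rewrite <- F_add, <- E. f_equal. destruct u, v; unfold gadd, gmul, gsub; cbn [fst snd]. f_equal; lia. Qed.
Variable b : T.
Hypothesis Ho : o = m (m a b) a.
Lemma Eid x y : m (m x y) x = m x (m y x).
Proof. rewrite (HA x y x), idem. reflexivity. Qed.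
Lemma mul_o x y : m x y = o -> add (add x (I x)) (add y (opp (I y))) = o.
Proof. intro H. rewrite <- mul2, H. apply add0r. Qed.
Lemma I_o : I o = o. Proof. apply hom_o, I_add. Qed.
Ltac Ieq H := let H' := fresh in assert (H' := f_equal I H);
  rewrite ?I_add, ?I_opp, ?II, ?opp_opp, ?I_o in H'.
Lemma ab_eq : m a b = I a.
Proof. assert (E1 := mul_o _ _ (eq_sym Ho)). set (X := m a b) in *.
  Ieq E1. apply two_inj.
  assert (E := f_equal2 add E1 (eq_sym H)).
  gsolve_with E (X :: I X :: a :: I a :: nil). Qed.
Lemma ba_eq : m b a = opp (I a).
Proof. assert (E2 : m a (m b a) = o) by (rewrite <- Eid; auto).
  apply mul_o in E2. set (Y := m b a) in *.
  Ieq E2. apply two_inj.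
  assert (E := f_equal2 add E2 H).
  gsolve_with E (Y :: I Y :: a :: I a :: nil). Qed.
Lemma b_eq : b = opp a.
Proof. assert (E3 : m b (m a b) = o) by (rewrite <- Eid, <- Ps; auto).
  apply mul_o in E3. rewrite ab_eq, II in E3.
  Ieq E3. apply two_inj.
  assert (E := f_equal2 add E3 (eq_sym H)).
  gsolve_with E (b :: I b :: a :: I a :: nil). Qed.

Definition ikc (k : nat) : Z * Z :=
  match k with 1 => (1%Z, 0%Z) | 2 => (0%Z, 1%Z) | 3 => (0%Z, (-1)%Z) | _ => ((-1)%Z, 0%Z) end.
Definition gk (k : nat) (u : Z * Z) := gmul (ikc k) u.
Definition gp (n : nat) : Z * Z := Nat.iter n (gmul (1%Z, 1%Z)) (1%Z, 0%Z).
Definition nm (t k : nat) := gk k (gp (t - 1)).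

Lemma F10 : F (1%Z, 0%Z) = a. Proof. unfold F; cbn [fst snd]. rewrite zmul1, zmul0. apply add0r. Qed.
Lemma F01 : F (0%Z, 1%Z) = I a. Proof. unfold F; cbn [fst snd]. rewrite zmul1, zmul0. apply add0l. Qed.
Lemma F0m : F (0%Z, (-1)%Z) = opp (I a). Proof. unfold F; cbn [fst snd]. rewrite zmul_m1, zmul0. apply add0l. Qed.
Lemma Fm0 : F ((-1)%Z, 0%Z) = opp a. Proof. unfold F; cbn [fst snd]. rewrite zmul_m1, zmul0. apply add0r. Qed.

Lemma Hrow_F n : Hrow m a b n = (F (gk 1 (gp n)), F (gk 2 (gp n)), F (gk 3 (gp n)), F (gk 4 (gp n))).
Proof. induction n.
  - cbn [Hrow]. replace (gk 1 (gp 0)) with (1%Z, 0%Z) by reflexivity.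
    replace (gk 2 (gp 0)) with (0%Z, 1%Z) by reflexivity.
    replace (gk 3 (gp 0)) with (0%Z, (-1)%Z) by reflexivity.
    replace (gk 4 (gp 0)) with ((-1)%Z, 0%Z) by reflexivity.
    rewrite F10, F01, F0m, Fm0, ab_eq, ba_eq, b_eq. reflexivity.
  - cbn [Hrow]. rewrite IHn.
    assert (G : gp (S n) = gmul (1%Z, 1%Z) (gp n)) by reflexivity.
    rewrite G. generalize (gp n) as u. intros [p q].
    repeat f_equal; apply mulF; unfold gk, ikc, gmul, gadd; cbn [fst snd]; f_equal; lia.
Qed.
Lemma elt_F t k : elt m a b t k = F (nm t k).
Proof. unfold elt, nm. rewrite Hrow_F.
  destruct k as [|[|[|[|k]]]]; reflexivity. Qed.

Lemma expand (P : nat -> nat -> Prop) :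
  (exists t, 1 <= t <= 6 /\ exists k, 1 <= k <= 4 /\ P t k) ->
  P 1 1 \/ P 1 2 \/ P 1 3 \/ P 1 4 \/ P 2 1 \/ P 2 2 \/ P 2 3 \/ P 2 4 \/
  P 3 1 \/ P 3 2 \/ P 3 3 \/ P 3 4 \/ P 4 1 \/ P 4 2 \/ P 4 3 \/ P 4 4 \/
  P 5 1 \/ P 5 2 \/ P 5 3 \/ P 5 4 \/ P 6 1 \/ P 6 2 \/ P 6 3 \/ P 6 4.
Proof. intros [t [Ht [k [Hk H]]]].
  destruct t as [|[|[|[|[|[|[|t]]]]]]]; try lia;
  destruct k as [|[|[|[|[|k]]]]]; try lia; tauto. Qed.

Lemma final
  (Hcov : forall x, x = o \/ exists t, 1 <= t <= 6 /\ exists k, 1 <= k <= 4 /\ x = F (nm t k))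
  (Hdis : forall t1 t2 k1 k2, 1 <= t1 <= 6 -> 1 <= t2 <= 6 -> t1 <> t2 -> 1 <= k1 <= 4 -> 1 <= k2 <= 4 ->
     F (nm t1 k1) <> F (nm t2 k2)) : False.
Proof.
  destruct (Hcov (F ((0)%Z, (-8)%Z))) as [H0|H0].
  { exact (Hdis 5 6 1 1 ltac:(lia) ltac:(lia) ltac:(lia) ltac:(lia) ltac:(lia) (cert1 _ ((-1)%Z, (0)%Z) 1 (nm 5 1) (nm 6 1) H0 ltac:(vm_compute; reflexivity))). }
  apply expand in H0.
  destruct H0 as [H0|H0].
  { apply F_eq0 in H0.
destruct (Hcov (F ((-2)%Z, (-1)%Z))) as [H1|H1].
{ exact (Hdis 1 2 1 4 ltac:(lia) ltac:(lia) ltac:(lia) ltac:(lia) ltac:(lia) (cert2 _ _ ((0)%Z, (0)%Z) ((-1)%Z, (0)%Z) 0 (nm 1 1) (nm 2 4) H0 H1 ltac:(vm_compute; reflexivity))). }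
apply expand in H1.
destruct H1 as [H1|H1].
{ apply F_eq0 in H1.
exact (Hdis 1 2 1 1 ltac:(lia) ltac:(lia) ltac:(lia) ltac:(lia) ltac:(lia) (cert2 _ _ ((1)%Z, (0)%Z) ((-1)%Z, (-2)%Z) 0 (nm 1 1) (nm 2 1) H0 H1 ltac:(vm_compute; reflexivity))). }
destruct H1 as [H1|H1].
{ apply F_eq0 in H1.
exact (Hdis 1 2 1 1 ltac:(lia) ltac:(lia) ltac:(lia) ltac:(lia) ltac:(lia) (cert2 _ _ ((0)%Z, (1)%Z) ((2)%Z, (-2)%Z) 0 (nm 1 1) (nm 2 1) H0 H1 ltac:(vm_compute; reflexivity))). }
destruct H1 as [H1|H1].
{ apply F_eq0 in H1.
exact (Hdis 1 2 1 1 ltac:(lia) ltac:(lia) ltac:(lia) ltac:(lia) ltac:(lia) (cert2 _ _ ((0)%Z, (-1)%Z) ((-4)%Z, (1)%Z) 0 (nm 1 1) (nm 2 1) H0 H1 ltac:(vm_compute; reflexivity))). }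
destruct H1 as [H1|H1].
{ apply F_eq0 in H1.
exact (Hdis 1 2 1 1 ltac:(lia) ltac:(lia) ltac:(lia) ltac:(lia) ltac:(lia) (cert2 _ _ ((-1)%Z, (0)%Z) ((5)%Z, (4)%Z) 0 (nm 1 1) (nm 2 1) H0 H1 ltac:(vm_compute; reflexivity))). }
destruct H1 as [H1|H1].
{ apply F_eq0 in H1.
exact (Hdis 1 2 1 1 ltac:(lia) ltac:(lia) ltac:(lia) ltac:(lia) ltac:(lia) (cert2 _ _ ((-1)%Z, (2)%Z) ((5)%Z, (-1)%Z) 0 (nm 1 1) (nm 2 1) H0 H1 ltac:(vm_compute; reflexivity))). }
destruct H1 as [H1|H1].
{ apply F_eq0 in H1.
exact (Hdis 1 2 1 1 ltac:(lia) ltac:(lia) ltac:(lia) ltac:(lia) ltac:(lia) (cert2 _ _ ((1)%Z, (0)%Z) ((-3)%Z, (-1)%Z) 0 (nm 1 1) (nm 2 1) H0 H1 ltac:(vm_compute; reflexivity))). }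
destruct H1 as [H1|H1].
{ apply F_eq0 in H1.
exact (Hdis 1 2 1 1 ltac:(lia) ltac:(lia) ltac:(lia) ltac:(lia) ltac:(lia) (cert2 _ _ ((-2)%Z, (2)%Z) ((6)%Z, (5)%Z) 0 (nm 1 1) (nm 2 1) H0 H1 ltac:(vm_compute; reflexivity))). }
destruct H1 as [H1|H1].
{ apply F_eq0 in H1.
exact (Hdis 1 2 1 1 ltac:(lia) ltac:(lia) ltac:(lia) ltac:(lia) ltac:(lia) (cert2 _ _ ((0)%Z, (0)%Z) ((0)%Z, (1)%Z) 0 (nm 1 1) (nm 2 1) H0 H1 ltac:(vm_compute; reflexivity))). }
destruct H1 as [H1|H1].
{ apply F_eq0 in H1.
exact (Hdis 1 4 1 1 ltac:(lia) ltac:(lia) ltac:(lia) ltac:(lia) ltac:(lia) (cert2 _ _ ((0)%Z, (0)%Z) ((0)%Z, (1)%Z) 0 (nm 1 1) (nm 4 1) H0 H1 ltac:(vm_compute; reflexivity))). }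
destruct H1 as [H1|H1].
{ apply F_eq0 in H1.
exact (Hdis 1 2 1 1 ltac:(lia) ltac:(lia) ltac:(lia) ltac:(lia) ltac:(lia) (cert2 _ _ ((0)%Z, (0)%Z) ((1)%Z, (0)%Z) 0 (nm 1 1) (nm 2 1) H0 H1 ltac:(vm_compute; reflexivity))). }
destruct H1 as [H1|H1].
{ apply F_eq0 in H1.
exact (Hdis 1 2 1 1 ltac:(lia) ltac:(lia) ltac:(lia) ltac:(lia) ltac:(lia) (cert2 _ _ ((2)%Z, (-2)%Z) ((-5)%Z, (-2)%Z) 0 (nm 1 1) (nm 2 1) H0 H1 ltac:(vm_compute; reflexivity))). }
destruct H1 as [H1|H1].
{ apply F_eq0 in H1.
exact (Hdis 1 2 1 1 ltac:(lia) ltac:(lia) ltac:(lia) ltac:(lia) ltac:(lia) (cert2 _ _ ((1)%Z, (0)%Z) ((1)%Z, (-3)%Z) 0 (nm 1 1) (nm 2 1) H0 H1 ltac:(vm_compute; reflexivity))). }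
destruct H1 as [H1|H1].
{ apply F_eq0 in H1.
exact (Hdis 1 2 1 1 ltac:(lia) ltac:(lia) ltac:(lia) ltac:(lia) ltac:(lia) (cert2 _ _ ((-2)%Z, (-1)%Z) ((6)%Z, (2)%Z) 0 (nm 1 1) (nm 2 1) H0 H1 ltac:(vm_compute; reflexivity))). }
destruct H1 as [H1|H1].
{ apply F_eq0 in H1.
exact (Hdis 1 2 1 1 ltac:(lia) ltac:(lia) ltac:(lia) ltac:(lia) ltac:(lia) (cert2 _ _ ((0)%Z, (0)%Z) ((-1)%Z, (0)%Z) 0 (nm 1 1) (nm 2 1) H0 H1 ltac:(vm_compute; reflexivity))). }
destruct H1 as [H1|H1].
{ apply F_eq0 in H1.
exact (Hdis 1 2 1 1 ltac:(lia) ltac:(lia) ltac:(lia) ltac:(lia) ltac:(lia) (cert2 _ _ ((1)%Z, (0)%Z) ((-1)%Z, (-1)%Z) 0 (nm 1 1) (nm 2 1) H0 H1 ltac:(vm_compute; reflexivity))). }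
destruct H1 as [H1|H1].
{ apply F_eq0 in H1.
exact (Hdis 1 2 1 1 ltac:(lia) ltac:(lia) ltac:(lia) ltac:(lia) ltac:(lia) (cert2 _ _ ((0)%Z, (-1)%Z) ((-2)%Z, (0)%Z) 0 (nm 1 1) (nm 2 1) H0 H1 ltac:(vm_compute; reflexivity))). }
destruct H1 as [H1|H1].
{ apply F_eq0 in H1.
exact (Hdis 1 2 1 1 ltac:(lia) ltac:(lia) ltac:(lia) ltac:(lia) ltac:(lia) (cert2 _ _ ((1)%Z, (0)%Z) ((-1)%Z, (3)%Z) 0 (nm 1 1) (nm 2 1) H0 H1 ltac:(vm_compute; reflexivity))). }
destruct H1 as [H1|H1].
{ apply F_eq0 in H1.
exact (Hdis 1 2 1 1 ltac:(lia) ltac:(lia) ltac:(lia) ltac:(lia) ltac:(lia) (cert2 _ _ ((1)%Z, (-1)%Z) ((0)%Z, (-3)%Z) 0 (nm 1 1) (nm 2 1) H0 H1 ltac:(vm_compute; reflexivity))). }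
destruct H1 as [H1|H1].
{ apply F_eq0 in H1.
exact (Hdis 1 2 1 1 ltac:(lia) ltac:(lia) ltac:(lia) ltac:(lia) ltac:(lia) (cert2 _ _ ((-1)%Z, (1)%Z) ((2)%Z, (-1)%Z) 0 (nm 1 1) (nm 2 1) H0 H1 ltac:(vm_compute; reflexivity))). }
destruct H1 as [H1|H1].
{ apply F_eq0 in H1.
exact (Hdis 1 2 1 1 ltac:(lia) ltac:(lia) ltac:(lia) ltac:(lia) ltac:(lia) (cert2 _ _ ((2)%Z, (-1)%Z) ((-2)%Z, (-2)%Z) 0 (nm 1 1) (nm 2 1) H0 H1 ltac:(vm_compute; reflexivity))). }
destruct H1 as [H1|H1].
{ apply F_eq0 in H1.
exact (Hdis 1 4 1 1 ltac:(lia) ltac:(lia) ltac:(lia) ltac:(lia) ltac:(lia) (cert2 _ _ ((0)%Z, (0)%Z) ((0)%Z, (-1)%Z) 0 (nm 1 1) (nm 4 1) H0 H1 ltac:(vm_compute; reflexivity))). }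
destruct H1 as [H1|H1].
{ apply F_eq0 in H1.
exact (Hdis 1 2 1 1 ltac:(lia) ltac:(lia) ltac:(lia) ltac:(lia) ltac:(lia) (cert2 _ _ ((-2)%Z, (-1)%Z) ((-2)%Z, (2)%Z) 0 (nm 1 1) (nm 2 1) H0 H1 ltac:(vm_compute; reflexivity))). }
destruct H1 as [H1|H1].
{ apply F_eq0 in H1.
exact (Hdis 1 2 1 1 ltac:(lia) ltac:(lia) ltac:(lia) ltac:(lia) ltac:(lia) (cert2 _ _ ((2)%Z, (-2)%Z) ((-1)%Z, (4)%Z) 0 (nm 1 1) (nm 2 1) H0 H1 ltac:(vm_compute; reflexivity))). }
apply F_eq0 in H1.
exact (Hdis 1 2 1 1 ltac:(lia) ltac:(lia) ltac:(lia) ltac:(lia) ltac:(lia) (cert2 _ _ ((-2)%Z, (2)%Z) ((3)%Z, (0)%Z) 0 (nm 1 1) (nm 2 1) H0 H1 ltac:(vm_compute; reflexivity))). }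
  destruct H0 as [H0|H0].
  { apply F_eq0 in H0.
destruct (Hcov (F ((-2)%Z, (-1)%Z))) as [H1|H1].
{ exact (Hdis 1 2 1 1 ltac:(lia) ltac:(lia) ltac:(lia) ltac:(lia) ltac:(lia) (cert2 _ _ ((-1)%Z, (0)%Z) ((2)%Z, (4)%Z) 0 (nm 1 1) (nm 2 1) H0 H1 ltac:(vm_compute; reflexivity))). }
apply expand in H1.
destruct H1 as [H1|H1].
{ apply F_eq0 in H1.
exact (Hdis 1 2 1 1 ltac:(lia) ltac:(lia) ltac:(lia) ltac:(lia) ltac:(lia) (cert2 _ _ ((-1)%Z, (0)%Z) ((1)%Z, (3)%Z) 0 (nm 1 1) (nm 2 1) H0 H1 ltac:(vm_compute; reflexivity))). }
destruct H1 as [H1|H1].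
{ apply F_eq0 in H1.
exact (Hdis 1 2 1 1 ltac:(lia) ltac:(lia) ltac:(lia) ltac:(lia) ltac:(lia) (cert2 _ _ ((1)%Z, (0)%Z) ((-2)%Z, (-2)%Z) 0 (nm 1 1) (nm 2 1) H0 H1 ltac:(vm_compute; reflexivity))). }
destruct H1 as [H1|H1].
{ apply F_eq0 in H1.
exact (Hdis 1 2 1 1 ltac:(lia) ltac:(lia) ltac:(lia) ltac:(lia) ltac:(lia) (cert2 _ _ ((-1)%Z, (0)%Z) ((0)%Z, (5)%Z) 0 (nm 1 1) (nm 2 1) H0 H1 ltac:(vm_compute; reflexivity))). }
destruct H1 as [H1|H1].
{ apply F_eq0 in H1.
exact (Hdis 1 2 1 1 ltac:(lia) ltac:(lia) ltac:(lia) ltac:(lia) ltac:(lia) (cert2 _ _ ((-1)%Z, (0)%Z) ((5)%Z, (5)%Z) 0 (nm 1 1) (nm 2 1) H0 H1 ltac:(vm_compute; reflexivity))). }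
destruct H1 as [H1|H1].
{ apply F_eq0 in H1.
exact (Hdis 1 2 1 1 ltac:(lia) ltac:(lia) ltac:(lia) ltac:(lia) ltac:(lia) (cert2 _ _ ((3)%Z, (0)%Z) ((-4)%Z, (-6)%Z) 0 (nm 1 1) (nm 2 1) H0 H1 ltac:(vm_compute; reflexivity))). }
destruct H1 as [H1|H1].
{ apply F_eq0 in H1.
exact (Hdis 1 2 1 1 ltac:(lia) ltac:(lia) ltac:(lia) ltac:(lia) ltac:(lia) (cert2 _ _ ((-1)%Z, (0)%Z) ((4)%Z, (2)%Z) 0 (nm 1 1) (nm 2 1) H0 H1 ltac:(vm_compute; reflexivity))). }
destruct H1 as [H1|H1].
{ apply F_eq0 in H1.
exact (Hdis 1 3 1 2 ltac:(lia) ltac:(lia) ltac:(lia) ltac:(lia) ltac:(lia) (cert2 _ _ ((0)%Z, (0)%Z) ((-1)%Z, (0)%Z) 0 (nm 1 1) (nm 3 2) H0 H1 ltac:(vm_compute; reflexivity))). }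
destruct H1 as [H1|H1].
{ apply F_eq0 in H1.
exact (Hdis 1 2 1 1 ltac:(lia) ltac:(lia) ltac:(lia) ltac:(lia) ltac:(lia) (cert2 _ _ ((0)%Z, (0)%Z) ((0)%Z, (1)%Z) 0 (nm 1 1) (nm 2 1) H0 H1 ltac:(vm_compute; reflexivity))). }
destruct H1 as [H1|H1].
{ apply F_eq0 in H1.
exact (Hdis 1 2 1 1 ltac:(lia) ltac:(lia) ltac:(lia) ltac:(lia) ltac:(lia) (cert2 _ _ ((-2)%Z, (-1)%Z) ((3)%Z, (5)%Z) 0 (nm 1 1) (nm 2 1) H0 H1 ltac:(vm_compute; reflexivity))). }
destruct H1 as [H1|H1].
{ apply F_eq0 in H1.
exact (Hdis 1 2 1 1 ltac:(lia) ltac:(lia) ltac:(lia) ltac:(lia) ltac:(lia) (cert2 _ _ ((0)%Z, (0)%Z) ((1)%Z, (0)%Z) 0 (nm 1 1) (nm 2 1) H0 H1 ltac:(vm_compute; reflexivity))). }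
destruct H1 as [H1|H1].
{ apply F_eq0 in H1.
exact (Hdis 1 2 1 1 ltac:(lia) ltac:(lia) ltac:(lia) ltac:(lia) ltac:(lia) (cert2 _ _ ((2)%Z, (0)%Z) ((-1)%Z, (-4)%Z) 0 (nm 1 1) (nm 2 1) H0 H1 ltac:(vm_compute; reflexivity))). }
destruct H1 as [H1|H1].
{ apply F_eq0 in H1.
exact (Hdis 1 2 1 1 ltac:(lia) ltac:(lia) ltac:(lia) ltac:(lia) ltac:(lia) (cert2 _ _ ((-1)%Z, (0)%Z) ((-2)%Z, (4)%Z) 0 (nm 1 1) (nm 2 1) H0 H1 ltac:(vm_compute; reflexivity))). }
destruct H1 as [H1|H1].
{ apply F_eq0 in H1.
exact (Hdis 1 3 1 2 ltac:(lia) ltac:(lia) ltac:(lia) ltac:(lia) ltac:(lia) (cert2 _ _ ((0)%Z, (0)%Z) ((0)%Z, (1)%Z) 0 (nm 1 1) (nm 3 2) H0 H1 ltac:(vm_compute; reflexivity))). }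
destruct H1 as [H1|H1].
{ apply F_eq0 in H1.
exact (Hdis 1 2 1 1 ltac:(lia) ltac:(lia) ltac:(lia) ltac:(lia) ltac:(lia) (cert2 _ _ ((0)%Z, (0)%Z) ((-1)%Z, (0)%Z) 0 (nm 1 1) (nm 2 1) H0 H1 ltac:(vm_compute; reflexivity))). }
destruct H1 as [H1|H1].
{ apply F_eq0 in H1.
exact (Hdis 1 2 1 1 ltac:(lia) ltac:(lia) ltac:(lia) ltac:(lia) ltac:(lia) (cert2 _ _ ((0)%Z, (2)%Z) ((3)%Z, (-2)%Z) 0 (nm 1 1) (nm 2 1) H0 H1 ltac:(vm_compute; reflexivity))). }
destruct H1 as [H1|H1].
{ apply F_eq0 in H1.
exact (Hdis 1 2 1 1 ltac:(lia) ltac:(lia) ltac:(lia) ltac:(lia) ltac:(lia) (cert2 _ _ ((2)%Z, (0)%Z) ((1)%Z, (-4)%Z) 0 (nm 1 1) (nm 2 1) H0 H1 ltac:(vm_compute; reflexivity))). }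
destruct H1 as [H1|H1].
{ apply F_eq0 in H1.
exact (Hdis 1 2 1 1 ltac:(lia) ltac:(lia) ltac:(lia) ltac:(lia) ltac:(lia) (cert2 _ _ ((-1)%Z, (0)%Z) ((2)%Z, (-4)%Z) 0 (nm 1 1) (nm 2 1) H0 H1 ltac:(vm_compute; reflexivity))). }
destruct H1 as [H1|H1].
{ apply F_eq0 in H1.
exact (Hdis 1 2 1 1 ltac:(lia) ltac:(lia) ltac:(lia) ltac:(lia) ltac:(lia) (cert2 _ _ ((0)%Z, (-2)%Z) ((-3)%Z, (-4)%Z) 0 (nm 1 1) (nm 2 1) H0 H1 ltac:(vm_compute; reflexivity))). }
destruct H1 as [H1|H1].
{ apply F_eq0 in H1.
exact (Hdis 1 2 1 1 ltac:(lia) ltac:(lia) ltac:(lia) ltac:(lia) ltac:(lia) (cert2 _ _ ((1)%Z, (-1)%Z) ((-2)%Z, (1)%Z) 0 (nm 1 1) (nm 2 1) H0 H1 ltac:(vm_compute; reflexivity))). }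
destruct H1 as [H1|H1].
{ apply F_eq0 in H1.
exact (Hdis 1 2 1 1 ltac:(lia) ltac:(lia) ltac:(lia) ltac:(lia) ltac:(lia) (cert2 _ _ ((2)%Z, (1)%Z) ((1)%Z, (-3)%Z) 0 (nm 1 1) (nm 2 1) H0 H1 ltac:(vm_compute; reflexivity))). }
destruct H1 as [H1|H1].
{ apply F_eq0 in H1.
exact (Hdis 1 2 1 1 ltac:(lia) ltac:(lia) ltac:(lia) ltac:(lia) ltac:(lia) (cert2 _ _ ((3)%Z, (0)%Z) ((6)%Z, (4)%Z) 0 (nm 1 1) (nm 2 1) H0 H1 ltac:(vm_compute; reflexivity))). }
destruct H1 as [H1|H1].
{ apply F_eq0 in H1.
exact (Hdis 1 3 1 2 ltac:(lia) ltac:(lia) ltac:(lia) ltac:(lia) ltac:(lia) (cert2 _ _ ((-1)%Z, (0)%Z) ((-1)%Z, (1)%Z) 0 (nm 1 1) (nm 3 2) H0 H1 ltac:(vm_compute; reflexivity))). }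
destruct H1 as [H1|H1].
{ apply F_eq0 in H1.
exact (Hdis 1 2 1 1 ltac:(lia) ltac:(lia) ltac:(lia) ltac:(lia) ltac:(lia) (cert2 _ _ ((1)%Z, (1)%Z) ((-2)%Z, (-1)%Z) 0 (nm 1 1) (nm 2 1) H0 H1 ltac:(vm_compute; reflexivity))). }
apply F_eq0 in H1.
exact (Hdis 1 2 1 1 ltac:(lia) ltac:(lia) ltac:(lia) ltac:(lia) ltac:(lia) (cert2 _ _ ((1)%Z, (3)%Z) ((2)%Z, (-3)%Z) 0 (nm 1 1) (nm 2 1) H0 H1 ltac:(vm_compute; reflexivity))). }
  destruct H0 as [H0|H0].
  { apply F_eq0 in H0.
destruct (Hcov (F ((-2)%Z, (-1)%Z))) as [H1|H1].
{ exact (Hdis 1 2 1 1 ltac:(lia) ltac:(lia) ltac:(lia) ltac:(lia) ltac:(lia) (cert2 _ _ ((0)%Z, (1)%Z) ((3)%Z, (-1)%Z) 0 (nm 1 1) (nm 2 1) H0 H1 ltac:(vm_compute; reflexivity))). }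
apply expand in H1.
destruct H1 as [H1|H1].
{ apply F_eq0 in H1.
exact (Hdis 1 2 1 1 ltac:(lia) ltac:(lia) ltac:(lia) ltac:(lia) ltac:(lia) (cert2 _ _ ((0)%Z, (-1)%Z) ((-2)%Z, (1)%Z) 0 (nm 1 1) (nm 2 1) H0 H1 ltac:(vm_compute; reflexivity))). }
destruct H1 as [H1|H1].
{ apply F_eq0 in H1.
exact (Hdis 1 2 1 1 ltac:(lia) ltac:(lia) ltac:(lia) ltac:(lia) ltac:(lia) (cert2 _ _ ((-1)%Z, (0)%Z) ((2)%Z, (2)%Z) 0 (nm 1 1) (nm 2 1) H0 H1 ltac:(vm_compute; reflexivity))). }
destruct H1 as [H1|H1].
{ apply F_eq0 in H1.
exact (Hdis 1 2 1 1 ltac:(lia) ltac:(lia) ltac:(lia) ltac:(lia) ltac:(lia) (cert2 _ _ ((-1)%Z, (0)%Z) ((0)%Z, (4)%Z) 0 (nm 1 1) (nm 2 1) H0 H1 ltac:(vm_compute; reflexivity))). }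
destruct H1 as [H1|H1].
{ apply F_eq0 in H1.
exact (Hdis 1 2 1 1 ltac:(lia) ltac:(lia) ltac:(lia) ltac:(lia) ltac:(lia) (cert2 _ _ ((-1)%Z, (0)%Z) ((4)%Z, (4)%Z) 0 (nm 1 1) (nm 2 1) H0 H1 ltac:(vm_compute; reflexivity))). }
destruct H1 as [H1|H1].
{ apply F_eq0 in H1.
exact (Hdis 1 2 1 1 ltac:(lia) ltac:(lia) ltac:(lia) ltac:(lia) ltac:(lia) (cert2 _ _ ((-3)%Z, (1)%Z) ((5)%Z, (4)%Z) 0 (nm 1 1) (nm 2 1) H0 H1 ltac:(vm_compute; reflexivity))). }
destruct H1 as [H1|H1].
{ apply F_eq0 in H1.
exact (Hdis 1 2 1 1 ltac:(lia) ltac:(lia) ltac:(lia) ltac:(lia) ltac:(lia) (cert2 _ _ ((0)%Z, (-1)%Z) ((-1)%Z, (3)%Z) 0 (nm 1 1) (nm 2 1) H0 H1 ltac:(vm_compute; reflexivity))). }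
destruct H1 as [H1|H1].
{ apply F_eq0 in H1.
exact (Hdis 1 2 1 1 ltac:(lia) ltac:(lia) ltac:(lia) ltac:(lia) ltac:(lia) (cert2 _ _ ((1)%Z, (0)%Z) ((0)%Z, (-2)%Z) 0 (nm 1 1) (nm 2 1) H0 H1 ltac:(vm_compute; reflexivity))). }
destruct H1 as [H1|H1].
{ apply F_eq0 in H1.
exact (Hdis 1 2 1 1 ltac:(lia) ltac:(lia) ltac:(lia) ltac:(lia) ltac:(lia) (cert2 _ _ ((0)%Z, (0)%Z) ((0)%Z, (1)%Z) 0 (nm 1 1) (nm 2 1) H0 H1 ltac:(vm_compute; reflexivity))). }
destruct H1 as [H1|H1].
{ apply F_eq0 in H1.
exact (Hdis 1 2 1 1 ltac:(lia) ltac:(lia) ltac:(lia) ltac:(lia) ltac:(lia) (cert2 _ _ ((2)%Z, (0)%Z) ((-3)%Z, (-2)%Z) 0 (nm 1 1) (nm 2 1) H0 H1 ltac:(vm_compute; reflexivity))). }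
destruct H1 as [H1|H1].
{ apply F_eq0 in H1.
exact (Hdis 1 2 1 1 ltac:(lia) ltac:(lia) ltac:(lia) ltac:(lia) ltac:(lia) (cert2 _ _ ((0)%Z, (0)%Z) ((1)%Z, (0)%Z) 0 (nm 1 1) (nm 2 1) H0 H1 ltac:(vm_compute; reflexivity))). }
destruct H1 as [H1|H1].
{ apply F_eq0 in H1.
exact (Hdis 1 2 1 1 ltac:(lia) ltac:(lia) ltac:(lia) ltac:(lia) ltac:(lia) (cert2 _ _ ((1)%Z, (-1)%Z) ((-2)%Z, (-1)%Z) 0 (nm 1 1) (nm 2 1) H0 H1 ltac:(vm_compute; reflexivity))). }
destruct H1 as [H1|H1].
{ apply F_eq0 in H1.
exact (Hdis 1 2 1 1 ltac:(lia) ltac:(lia) ltac:(lia) ltac:(lia) ltac:(lia) (cert2 _ _ ((0)%Z, (-1)%Z) ((-3)%Z, (-1)%Z) 0 (nm 1 1) (nm 2 1) H0 H1 ltac:(vm_compute; reflexivity))). }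
destruct H1 as [H1|H1].
{ apply F_eq0 in H1.
exact (Hdis 1 2 1 1 ltac:(lia) ltac:(lia) ltac:(lia) ltac:(lia) ltac:(lia) (cert2 _ _ ((1)%Z, (0)%Z) ((-2)%Z, (0)%Z) 0 (nm 1 1) (nm 2 1) H0 H1 ltac:(vm_compute; reflexivity))). }
destruct H1 as [H1|H1].
{ apply F_eq0 in H1.
exact (Hdis 1 2 1 1 ltac:(lia) ltac:(lia) ltac:(lia) ltac:(lia) ltac:(lia) (cert2 _ _ ((0)%Z, (0)%Z) ((-1)%Z, (0)%Z) 0 (nm 1 1) (nm 2 1) H0 H1 ltac:(vm_compute; reflexivity))). }
destruct H1 as [H1|H1].
{ apply F_eq0 in H1.
exact (Hdis 1 2 1 1 ltac:(lia) ltac:(lia) ltac:(lia) ltac:(lia) ltac:(lia) (cert2 _ _ ((0)%Z, (-1)%Z) ((-1)%Z, (1)%Z) 0 (nm 1 1) (nm 2 1) H0 H1 ltac:(vm_compute; reflexivity))). }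
destruct H1 as [H1|H1].
{ apply F_eq0 in H1.
exact (Hdis 1 2 1 1 ltac:(lia) ltac:(lia) ltac:(lia) ltac:(lia) ltac:(lia) (cert2 _ _ ((1)%Z, (1)%Z) ((2)%Z, (-1)%Z) 0 (nm 1 1) (nm 2 1) H0 H1 ltac:(vm_compute; reflexivity))). }
destruct H1 as [H1|H1].
{ apply F_eq0 in H1.
exact (Hdis 1 2 1 1 ltac:(lia) ltac:(lia) ltac:(lia) ltac:(lia) ltac:(lia) (cert2 _ _ ((0)%Z, (-1)%Z) ((3)%Z, (1)%Z) 0 (nm 1 1) (nm 2 1) H0 H1 ltac:(vm_compute; reflexivity))). }
destruct H1 as [H1|H1].
{ apply F_eq0 in H1.
exact (Hdis 1 2 1 1 ltac:(lia) ltac:(lia) ltac:(lia) ltac:(lia) ltac:(lia) (cert2 _ _ ((0)%Z, (3)%Z) ((3)%Z, (5)%Z) 0 (nm 1 1) (nm 2 1) H0 H1 ltac:(vm_compute; reflexivity))). }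
destruct H1 as [H1|H1].
{ apply F_eq0 in H1.
exact (Hdis 1 2 1 1 ltac:(lia) ltac:(lia) ltac:(lia) ltac:(lia) ltac:(lia) (cert2 _ _ ((1)%Z, (-2)%Z) ((-2)%Z, (2)%Z) 0 (nm 1 1) (nm 2 1) H0 H1 ltac:(vm_compute; reflexivity))). }
destruct H1 as [H1|H1].
{ apply F_eq0 in H1.
exact (Hdis 1 2 1 1 ltac:(lia) ltac:(lia) ltac:(lia) ltac:(lia) ltac:(lia) (cert2 _ _ ((4)%Z, (-2)%Z) ((-3)%Z, (-4)%Z) 0 (nm 1 1) (nm 2 1) H0 H1 ltac:(vm_compute; reflexivity))). }
destruct H1 as [H1|H1].
{ apply F_eq0 in H1.
exact (Hdis 1 2 1 1 ltac:(lia) ltac:(lia) ltac:(lia) ltac:(lia) ltac:(lia) (cert2 _ _ ((-3)%Z, (-1)%Z) ((-4)%Z, (-5)%Z) 0 (nm 1 1) (nm 2 1) H0 H1 ltac:(vm_compute; reflexivity))). }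
destruct H1 as [H1|H1].
{ apply F_eq0 in H1.
exact (Hdis 1 2 1 1 ltac:(lia) ltac:(lia) ltac:(lia) ltac:(lia) ltac:(lia) (cert2 _ _ ((-2)%Z, (0)%Z) ((-1)%Z, (2)%Z) 0 (nm 1 1) (nm 2 1) H0 H1 ltac:(vm_compute; reflexivity))). }
destruct H1 as [H1|H1].
{ apply F_eq0 in H1.
exact (Hdis 1 2 1 1 ltac:(lia) ltac:(lia) ltac:(lia) ltac:(lia) ltac:(lia) (cert2 _ _ ((1)%Z, (2)%Z) ((-2)%Z, (-2)%Z) 0 (nm 1 1) (nm 2 1) H0 H1 ltac:(vm_compute; reflexivity))). }
apply F_eq0 in H1.
exact (Hdis 1 2 1 1 ltac:(lia) ltac:(lia) ltac:(lia) ltac:(lia) ltac:(lia) (cert2 _ _ ((2)%Z, (3)%Z) ((1)%Z, (-3)%Z) 0 (nm 1 1) (nm 2 1) H0 H1 ltac:(vm_compute; reflexivity))). }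
  destruct H0 as [H0|H0].
  { apply F_eq0 in H0.
destruct (Hcov (F ((-2)%Z, (-1)%Z))) as [H1|H1].
{ exact (Hdis 1 2 1 1 ltac:(lia) ltac:(lia) ltac:(lia) ltac:(lia) ltac:(lia) (cert2 _ _ ((1)%Z, (0)%Z) ((-1)%Z, (-3)%Z) 0 (nm 1 1) (nm 2 1) H0 H1 ltac:(vm_compute; reflexivity))). }
apply expand in H1.
destruct H1 as [H1|H1].
{ apply F_eq0 in H1.
exact (Hdis 1 2 1 2 ltac:(lia) ltac:(lia) ltac:(lia) ltac:(lia) ltac:(lia) (cert2 _ _ ((0)%Z, (-1)%Z) ((-3)%Z, (1)%Z) 0 (nm 1 1) (nm 2 2) H0 H1 ltac:(vm_compute; reflexivity))). }
destruct H1 as [H1|H1].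
{ apply F_eq0 in H1.
exact (Hdis 1 2 1 1 ltac:(lia) ltac:(lia) ltac:(lia) ltac:(lia) ltac:(lia) (cert2 _ _ ((0)%Z, (-1)%Z) ((-2)%Z, (2)%Z) 0 (nm 1 1) (nm 2 1) H0 H1 ltac:(vm_compute; reflexivity))). }
destruct H1 as [H1|H1].
{ apply F_eq0 in H1.
exact (Hdis 1 2 1 1 ltac:(lia) ltac:(lia) ltac:(lia) ltac:(lia) ltac:(lia) (cert2 _ _ ((0)%Z, (-1)%Z) ((-4)%Z, (0)%Z) 0 (nm 1 1) (nm 2 1) H0 H1 ltac:(vm_compute; reflexivity))). }
destruct H1 as [H1|H1].
{ apply F_eq0 in H1.
exact (Hdis 1 2 1 1 ltac:(lia) ltac:(lia) ltac:(lia) ltac:(lia) ltac:(lia) (cert2 _ _ ((-1)%Z, (0)%Z) ((4)%Z, (5)%Z) 0 (nm 1 1) (nm 2 1) H0 H1 ltac:(vm_compute; reflexivity))). }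
destruct H1 as [H1|H1].
{ apply F_eq0 in H1.
exact (Hdis 1 4 1 2 ltac:(lia) ltac:(lia) ltac:(lia) ltac:(lia) ltac:(lia) (cert2 _ _ ((0)%Z, (0)%Z) ((-1)%Z, (0)%Z) 0 (nm 1 1) (nm 4 2) H0 H1 ltac:(vm_compute; reflexivity))). }
destruct H1 as [H1|H1].
{ apply F_eq0 in H1.
exact (Hdis 1 2 1 2 ltac:(lia) ltac:(lia) ltac:(lia) ltac:(lia) ltac:(lia) (cert2 _ _ ((0)%Z, (0)%Z) ((0)%Z, (1)%Z) 0 (nm 1 1) (nm 2 2) H0 H1 ltac:(vm_compute; reflexivity))). }
destruct H1 as [H1|H1].
{ apply F_eq0 in H1.
exact (Hdis 1 2 1 1 ltac:(lia) ltac:(lia) ltac:(lia) ltac:(lia) ltac:(lia) (cert2 _ _ ((1)%Z, (-2)%Z) ((-5)%Z, (-3)%Z) 0 (nm 1 1) (nm 2 1) H0 H1 ltac:(vm_compute; reflexivity))). }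
destruct H1 as [H1|H1].
{ apply F_eq0 in H1.
exact (Hdis 1 2 1 1 ltac:(lia) ltac:(lia) ltac:(lia) ltac:(lia) ltac:(lia) (cert2 _ _ ((0)%Z, (0)%Z) ((0)%Z, (1)%Z) 0 (nm 1 1) (nm 2 1) H0 H1 ltac:(vm_compute; reflexivity))). }
destruct H1 as [H1|H1].
{ apply F_eq0 in H1.
exact (Hdis 1 2 1 1 ltac:(lia) ltac:(lia) ltac:(lia) ltac:(lia) ltac:(lia) (cert2 _ _ ((1)%Z, (1)%Z) ((0)%Z, (-3)%Z) 0 (nm 1 1) (nm 2 1) H0 H1 ltac:(vm_compute; reflexivity))). }
destruct H1 as [H1|H1].
{ apply F_eq0 in H1.
exact (Hdis 1 2 1 1 ltac:(lia) ltac:(lia) ltac:(lia) ltac:(lia) ltac:(lia) (cert2 _ _ ((0)%Z, (0)%Z) ((1)%Z, (0)%Z) 0 (nm 1 1) (nm 2 1) H0 H1 ltac:(vm_compute; reflexivity))). }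
destruct H1 as [H1|H1].
{ apply F_eq0 in H1.
exact (Hdis 1 2 1 1 ltac:(lia) ltac:(lia) ltac:(lia) ltac:(lia) ltac:(lia) (cert2 _ _ ((0)%Z, (1)%Z) ((2)%Z, (0)%Z) 0 (nm 1 1) (nm 2 1) H0 H1 ltac:(vm_compute; reflexivity))). }
destruct H1 as [H1|H1].
{ apply F_eq0 in H1.
exact (Hdis 1 2 1 2 ltac:(lia) ltac:(lia) ltac:(lia) ltac:(lia) ltac:(lia) (cert2 _ _ ((0)%Z, (0)%Z) ((-1)%Z, (0)%Z) 0 (nm 1 1) (nm 2 2) H0 H1 ltac:(vm_compute; reflexivity))). }
destruct H1 as [H1|H1].
{ apply F_eq0 in H1.
exact (Hdis 1 2 1 1 ltac:(lia) ltac:(lia) ltac:(lia) ltac:(lia) ltac:(lia) (cert2 _ _ ((1)%Z, (1)%Z) ((-2)%Z, (-3)%Z) 0 (nm 1 1) (nm 2 1) H0 H1 ltac:(vm_compute; reflexivity))). }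
destruct H1 as [H1|H1].
{ apply F_eq0 in H1.
exact (Hdis 1 2 1 1 ltac:(lia) ltac:(lia) ltac:(lia) ltac:(lia) ltac:(lia) (cert2 _ _ ((0)%Z, (0)%Z) ((-1)%Z, (0)%Z) 0 (nm 1 1) (nm 2 1) H0 H1 ltac:(vm_compute; reflexivity))). }
destruct H1 as [H1|H1].
{ apply F_eq0 in H1.
exact (Hdis 1 2 1 2 ltac:(lia) ltac:(lia) ltac:(lia) ltac:(lia) ltac:(lia) (cert2 _ _ ((1)%Z, (0)%Z) ((-1)%Z, (-1)%Z) 0 (nm 1 1) (nm 2 2) H0 H1 ltac:(vm_compute; reflexivity))). }
destruct H1 as [H1|H1].
{ apply F_eq0 in H1.
exact (Hdis 1 2 1 1 ltac:(lia) ltac:(lia) ltac:(lia) ltac:(lia) ltac:(lia) (cert2 _ _ ((-2)%Z, (3)%Z) ((4)%Z, (6)%Z) 0 (nm 1 1) (nm 2 1) H0 H1 ltac:(vm_compute; reflexivity))). }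
destruct H1 as [H1|H1].
{ apply F_eq0 in H1.
exact (Hdis 1 2 1 2 ltac:(lia) ltac:(lia) ltac:(lia) ltac:(lia) ltac:(lia) (cert2 _ _ ((0)%Z, (0)%Z) ((1)%Z, (0)%Z) 0 (nm 1 1) (nm 2 2) H0 H1 ltac:(vm_compute; reflexivity))). }
destruct H1 as [H1|H1].
{ apply F_eq0 in H1.
exact (Hdis 1 4 1 2 ltac:(lia) ltac:(lia) ltac:(lia) ltac:(lia) ltac:(lia) (cert2 _ _ ((0)%Z, (0)%Z) ((0)%Z, (-1)%Z) 0 (nm 1 1) (nm 4 2) H0 H1 ltac:(vm_compute; reflexivity))). }
destruct H1 as [H1|H1].
{ apply F_eq0 in H1.
exact (Hdis 1 2 1 1 ltac:(lia) ltac:(lia) ltac:(lia) ltac:(lia) ltac:(lia) (cert2 _ _ ((2)%Z, (2)%Z) ((-1)%Z, (-4)%Z) 0 (nm 1 1) (nm 2 1) H0 H1 ltac:(vm_compute; reflexivity))). }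
destruct H1 as [H1|H1].
{ apply F_eq0 in H1.
exact (Hdis 1 2 1 1 ltac:(lia) ltac:(lia) ltac:(lia) ltac:(lia) ltac:(lia) (cert2 _ _ ((1)%Z, (-3)%Z) ((-4)%Z, (-1)%Z) 0 (nm 1 1) (nm 2 1) H0 H1 ltac:(vm_compute; reflexivity))). }
destruct H1 as [H1|H1].
{ apply F_eq0 in H1.
exact (Hdis 1 2 1 1 ltac:(lia) ltac:(lia) ltac:(lia) ltac:(lia) ltac:(lia) (cert2 _ _ ((-1)%Z, (-2)%Z) ((1)%Z, (-5)%Z) 0 (nm 1 1) (nm 2 1) H0 H1 ltac:(vm_compute; reflexivity))). }
destruct H1 as [H1|H1].
{ apply F_eq0 in H1.
exact (Hdis 1 2 1 2 ltac:(lia) ltac:(lia) ltac:(lia) ltac:(lia) ltac:(lia) (cert2 _ _ ((-1)%Z, (0)%Z) ((-1)%Z, (1)%Z) 0 (nm 1 1) (nm 2 2) H0 H1 ltac:(vm_compute; reflexivity))). }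
destruct H1 as [H1|H1].
{ apply F_eq0 in H1.
exact (Hdis 1 2 1 1 ltac:(lia) ltac:(lia) ltac:(lia) ltac:(lia) ltac:(lia) (cert2 _ _ ((-1)%Z, (-1)%Z) ((2)%Z, (1)%Z) 0 (nm 1 1) (nm 2 1) H0 H1 ltac:(vm_compute; reflexivity))). }
apply F_eq0 in H1.
exact (Hdis 1 2 1 1 ltac:(lia) ltac:(lia) ltac:(lia) ltac:(lia) ltac:(lia) (cert2 _ _ ((6)%Z, (-2)%Z) ((-5)%Z, (-4)%Z) 0 (nm 1 1) (nm 2 1) H0 H1 ltac:(vm_compute; reflexivity))). }
  destruct H0 as [H0|H0].
  { apply F_eq0 in H0.
exact (Hdis 1 6 1 1 ltac:(lia) ltac:(lia) ltac:(lia) ltac:(lia) ltac:(lia) (cert1 _ ((-1)%Z, (1)%Z) 1 (nm 1 1) (nm 6 1) H0 ltac:(vm_compute; reflexivity))). }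
  destruct H0 as [H0|H0].
  { apply F_eq0 in H0.
exact (Hdis 1 6 1 3 ltac:(lia) ltac:(lia) ltac:(lia) ltac:(lia) ltac:(lia) (cert1 _ ((1)%Z, (1)%Z) 1 (nm 1 1) (nm 6 3) H0 ltac:(vm_compute; reflexivity))). }
  destruct H0 as [H0|H0].
  { apply F_eq0 in H0.
exact (Hdis 1 6 1 2 ltac:(lia) ltac:(lia) ltac:(lia) ltac:(lia) ltac:(lia) (cert1 _ ((-1)%Z, (-1)%Z) 1 (nm 1 1) (nm 6 2) H0 ltac:(vm_compute; reflexivity))). }
  destruct H0 as [H0|H0].
  { apply F_eq0 in H0.
exact (Hdis 1 6 1 4 ltac:(lia) ltac:(lia) ltac:(lia) ltac:(lia) ltac:(lia) (cert1 _ ((1)%Z, (-1)%Z) 1 (nm 1 1) (nm 6 4) H0 ltac:(vm_compute; reflexivity))). }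
  destruct H0 as [H0|H0].
  { apply F_eq0 in H0.
exact (Hdis 1 5 1 1 ltac:(lia) ltac:(lia) ltac:(lia) ltac:(lia) ltac:(lia) (cert1 _ ((0)%Z, (1)%Z) 1 (nm 1 1) (nm 5 1) H0 ltac:(vm_compute; reflexivity))). }
  destruct H0 as [H0|H0].
  { apply F_eq0 in H0.
exact (Hdis 1 5 1 3 ltac:(lia) ltac:(lia) ltac:(lia) ltac:(lia) ltac:(lia) (cert1 _ ((1)%Z, (0)%Z) 1 (nm 1 1) (nm 5 3) H0 ltac:(vm_compute; reflexivity))). }
  destruct H0 as [H0|H0].
  { apply F_eq0 in H0.
exact (Hdis 1 5 1 2 ltac:(lia) ltac:(lia) ltac:(lia) ltac:(lia) ltac:(lia) (cert1 _ ((-1)%Z, (0)%Z) 1 (nm 1 1) (nm 5 2) H0 ltac:(vm_compute; reflexivity))). }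
  destruct H0 as [H0|H0].
  { apply F_eq0 in H0.
exact (Hdis 3 5 1 2 ltac:(lia) ltac:(lia) ltac:(lia) ltac:(lia) ltac:(lia) (cert1 _ ((-1)%Z, (0)%Z) 0 (nm 3 1) (nm 5 2) H0 ltac:(vm_compute; reflexivity))). }
  destruct H0 as [H0|H0].
  { apply F_eq0 in H0.
exact (Hdis 2 5 1 1 ltac:(lia) ltac:(lia) ltac:(lia) ltac:(lia) ltac:(lia) (cert1 _ ((0)%Z, (1)%Z) 1 (nm 2 1) (nm 5 1) H0 ltac:(vm_compute; reflexivity))). }
  destruct H0 as [H0|H0].
  { apply F_eq0 in H0.
exact (Hdis 4 5 1 2 ltac:(lia) ltac:(lia) ltac:(lia) ltac:(lia) ltac:(lia) (cert1 _ ((-1)%Z, (0)%Z) 0 (nm 4 1) (nm 5 2) H0 ltac:(vm_compute; reflexivity))). }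
  destruct H0 as [H0|H0].
  { apply F_eq0 in H0.
exact (Hdis 2 5 1 2 ltac:(lia) ltac:(lia) ltac:(lia) ltac:(lia) ltac:(lia) (cert1 _ ((-1)%Z, (0)%Z) 1 (nm 2 1) (nm 5 2) H0 ltac:(vm_compute; reflexivity))). }
  destruct H0 as [H0|H0].
  { apply F_eq0 in H0.
exact (Hdis 4 5 1 4 ltac:(lia) ltac:(lia) ltac:(lia) ltac:(lia) ltac:(lia) (cert1 _ ((0)%Z, (-1)%Z) 0 (nm 4 1) (nm 5 4) H0 ltac:(vm_compute; reflexivity))). }
  destruct H0 as [H0|H0].
  { apply F_eq0 in H0.
exact (Hdis 5 6 1 4 ltac:(lia) ltac:(lia) ltac:(lia) ltac:(lia) ltac:(lia) (cert1 _ ((0)%Z, (-1)%Z) 0 (nm 5 1) (nm 6 4) H0 ltac:(vm_compute; reflexivity))). }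
  destruct H0 as [H0|H0].
  { apply F_eq0 in H0.
exact (Hdis 5 6 1 1 ltac:(lia) ltac:(lia) ltac:(lia) ltac:(lia) ltac:(lia) (cert1 _ ((-1)%Z, (0)%Z) 0 (nm 5 1) (nm 6 1) H0 ltac:(vm_compute; reflexivity))). }
  destruct H0 as [H0|H0].
  { apply F_eq0 in H0.
exact (Hdis 3 5 1 2 ltac:(lia) ltac:(lia) ltac:(lia) ltac:(lia) ltac:(lia) (cert1 _ ((-1)%Z, (0)%Z) 1 (nm 3 1) (nm 5 2) H0 ltac:(vm_compute; reflexivity))). }
  destruct H0 as [H0|H0].
  { apply F_eq0 in H0.
exact (Hdis 5 6 1 2 ltac:(lia) ltac:(lia) ltac:(lia) ltac:(lia) ltac:(lia) (cert1 _ ((0)%Z, (-1)%Z) 0 (nm 5 1) (nm 6 2) H0 ltac:(vm_compute; reflexivity))). }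
  destruct H0 as [H0|H0].
  { apply F_eq0 in H0.
exact (Hdis 4 5 1 1 ltac:(lia) ltac:(lia) ltac:(lia) ltac:(lia) ltac:(lia) (cert1 _ ((0)%Z, (1)%Z) 1 (nm 4 1) (nm 5 1) H0 ltac:(vm_compute; reflexivity))). }
  destruct H0 as [H0|H0].
  { apply F_eq0 in H0.
exact (Hdis 4 5 1 1 ltac:(lia) ltac:(lia) ltac:(lia) ltac:(lia) ltac:(lia) (cert1 _ ((-1)%Z, (0)%Z) 1 (nm 4 1) (nm 5 1) H0 ltac:(vm_compute; reflexivity))). }
  destruct H0 as [H0|H0].
  { apply F_eq0 in H0.
exact (Hdis 4 5 1 2 ltac:(lia) ltac:(lia) ltac:(lia) ltac:(lia) ltac:(lia) (cert1 _ ((-1)%Z, (0)%Z) 1 (nm 4 1) (nm 5 2) H0 ltac:(vm_compute; reflexivity))). }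
apply F_eq0 in H0.
exact (Hdis 4 5 1 4 ltac:(lia) ltac:(lia) ltac:(lia) ltac:(lia) ltac:(lia) (cert1 _ ((0)%Z, (-1)%Z) 1 (nm 4 1) (nm 5 4) H0 ltac:(vm_compute; reflexivity))).
Qed.
End Q.

Theorem theorem7p1 :
  forall (T : Type) (mul : T -> T -> T),
    is_quadratical_quasigroup mul ->
    forall a b : T, a <> b ->
    ~ ( (forall x : T, x = aba mul a b \/ exists t, 1 <= t <= 6 /\ inH mul a b t x)
        /\ (forall i j : nat, 1 <= i <= 6 -> 1 <= j <= 6 -> i <> j ->
              forall x : T, ~ (inH mul a b i x /\ inH mul a b j x)) ).
Proof.
  intros T mul [[Hl Hr] HA] a b _ [Hcov Hdis].
  pose proof (elt_F T mul Hl Hr HA (aba mul a b) a b eq_refl) as EF.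
  apply (final T mul Hl Hr HA (aba mul a b) a).
  - intro x. destruct (Hcov x) as [H|[t [Ht [k [Hk H]]]]].
    + left; exact H.
    + right. exists t. split; [exact Ht|]. exists k. split; [exact Hk|]. rewrite H. apply EF.
  - intros t1 t2 k1 k2 H1 H2 Hne Hk1 Hk2 E.
    apply (Hdis t1 t2 H1 H2 Hne (elt mul a b t1 k1)). split.
    + exists k1. split; auto.
    + exists k2. split; auto. rewrite !EF. exact E.
Qed.
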